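(* Fix a non-negative integer $t$ and consider finite rooted trees $T$ such that every root-to-leaf path $v_1,v_2,\ldots,v_q$ satisfies $\sum_{i=1}^{q} c(v_i) \le t$, where $c(v)$ denotes the number of children of node $v$. The maximum number of leaves of such a tree is $l(t)$, where $l(1)=1$ and for $t\ne 1$: $l(t)=3^i$ if $t=3i$; $l(t)=4\cdot 3^{i-1}$ if $t=3i+1$; $l(t)=2\cdot 3^i$ if $t=3i+2$ (with $i$ a non-negative integer). *)

(* Defs.v *)
From Stdlib Require Import Arith List.
Import ListNotations.

Inductive tree : Type := Node : list tree -> tree.

Definition nchildren (v : tree) : nat :=
  match v with Node ts => length ts end.

Fixpoint leaves (T : tree) : nat :=
  match T with
  | Node nil => 1
  | Node ts =>
      (fix go (l : list tree) : nat :=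
         match l with nil => 0 | x :: r => leaves x + go r end) ts
  end.

(* rtl_path T p : p = [v_1; ...; v_q] is a root-to-leaf path of T
   (v_1 the root of T, v_q a leaf, v_{i+1} a child of v_i). *)
Inductive rtl_path : tree -> list tree -> Prop :=
  | rtl_leaf : rtl_path (Node nil) [Node nil]
  | rtl_step : forall ts c p, In c ts -> rtl_path c p ->
      rtl_path (Node ts) (Node ts :: p).

Definition admissible (t : nat) (T : tree) : Prop :=
  forall p, rtl_path T p -> list_sum (map nchildren p) <= t.

(* l(t) as in the paper, with i = t / 3. *)
Definition lval (t : nat) : nat :=
  if Nat.eqb t 1 then 1 else
  match t mod 3 with
  | 0 => 3 ^ (t / 3)
  | 1 => 4 * 3 ^ (t / 3 - 1)
  | _ => 2 * 3 ^ (t / 3)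
  end.

(* Main.v *)
Require Import Defs.
From Stdlib Require Import Arith List Lia.
Import ListNotations.

Lemma lval_step t : 2 <= t -> lval (t + 3) = 3 * lval t.
Proof.
  intro Ht. unfold lval.
  replace (Nat.eqb (t+3) 1) with false by (symmetry; apply Nat.eqb_neq; lia).
  replace (Nat.eqb t 1) with false by (symmetry; apply Nat.eqb_neq; lia).
  replace (t + 3) with (t + 1 * 3) by lia.
  rewrite Nat.div_add by lia. rewrite Nat.mod_add by lia.
  pose proof (Nat.div_mod t 3 ltac:(lia)) as Hd.
  pose proof (Nat.mod_upper_bound t 3 ltac:(lia)) as Hm.
  destruct (t mod 3) as [|[|[|r]]] eqn:E; try lia.
  - rewrite Nat.pow_add_r. simpl. lia.
  - assert (1 <= t / 3) by lia.
    replace (t / 3 + 1 - 1) with (S (t/3 - 1)) by lia. simpl. lia.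
  - rewrite Nat.pow_add_r. simpl. lia.
Qed.

Lemma lval_small : lval 0 = 1 /\ lval 1 = 1 /\ lval 2 = 2 /\ lval 3 = 3 /\ lval 4 = 4.
Proof. repeat split; reflexivity. Qed.

Lemma lval_mul_n n : forall a b, a + b <= n -> lval a * lval b <= lval (a + b).
Proof.
  induction n as [|n IH]; intros a b H.
  - assert (a = 0) by lia; assert (b = 0) by lia; subst. cbn. lia.
  - destruct (le_lt_dec 5 a).
    + replace a with ((a - 3) + 3) by lia.
      replace (a - 3 + 3 + b) with ((a - 3 + b) + 3) by lia.
      rewrite !lval_step by lia.
      specialize (IH (a-3) b ltac:(lia)). nia.
    + destruct (le_lt_dec 5 b).
      * replace b with ((b - 3) + 3) by lia.
        replace (a + (b - 3 + 3)) with ((a + (b - 3)) + 3) by lia.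
        rewrite !lval_step by lia.
        specialize (IH a (b-3) ltac:(lia)). nia.
      * do 5 (destruct a as [|a]; [do 5 (destruct b as [|b]; [vm_compute; lia|]); lia|]). lia.
Qed.

Lemma lval_mul a b : lval a * lval b <= lval (a + b).
Proof. apply (lval_mul_n (a+b)); lia. Qed.

Lemma lval_ge_n n : forall k, k <= n -> 1 <= k -> k <= lval k.
Proof.
  induction n as [|n IH]; intros k H H1.
  - lia.
  - destruct (le_lt_dec 5 k).
    + replace k with ((k-3)+3) by lia. rewrite lval_step by lia.
      specialize (IH (k-3) ltac:(lia) ltac:(lia)). lia.
    + do 5 (destruct k as [|k]; [vm_compute; lia|]). lia.
Qed.

Lemma lval_pos t : 1 <= lval t.
Proof.
  destruct t. vm_compute; lia.
  pose proof (lval_ge_n (S t) (S t) ltac:(lia) ltac:(lia)). lia.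
Qed.

Lemma leaves_list ts : ts <> nil -> leaves (Node ts) = list_sum (map leaves ts).
Proof.
  induction ts as [|x r IH]; intro H; [congruence|].
  destruct r as [|y r].
  - cbn. lia.
  - specialize (IH ltac:(discriminate)). cbn in IH |- *. rewrite IH. reflexivity.
Qed.

Fixpoint tree_ind' (P : tree -> Prop)
  (H : forall ts, (forall c, In c ts -> P c) -> P (Node ts)) (T : tree) : P T :=
  match T with
  | Node ts => H ts ((fix go (l : list tree) : forall c, In c l -> P c :=
      match l with
      | nil => fun c i => False_ind _ i
      | x :: r => fun c i => match i with
                  | or_introl e => eq_ind x P (tree_ind' P H x) c e
                  | or_intror i' => go r c i'
                  end
      end) ts)
  end.

Lemma path_exists T : exists p, rtl_path T p.
Proof.
  induction T as [ts IH] using tree_ind'.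
  destruct ts as [|c r].
  - exists [Node nil]. constructor.
  - destruct (IH c (or_introl eq_refl)) as [p Hp].
    exists (Node (c :: r) :: p). econstructor; [left; reflexivity|exact Hp].
Qed.

Lemma sum_bound (f : tree -> nat) m ts :
  (forall c, In c ts -> f c <= m) -> list_sum (map f ts) <= length ts * m.
Proof.
  induction ts as [|x r IH]; intro H; cbn; [lia|].
  pose proof (H x (or_introl eq_refl)).
  assert (list_sum (map f r) <= length r * m) by (apply IH; intros; apply H; right; auto).
  simpl. unfold list_sum in H1. lia.
Qed.

Lemma upper T : forall t, admissible t T -> leaves T <= lval t.
Proof.
  induction T as [ts IH] using tree_ind'. intros t Ha.
  destruct ts as [|c0 r].
  - cbn. apply lval_pos.
  - set (ts := c0 :: r) in *. set (k := length ts).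
    assert (Hc : forall c p, In c ts -> rtl_path c p -> k + list_sum (map nchildren p) <= t).
    { intros c p Hin Hp. specialize (Ha _ (rtl_step ts c p Hin Hp)). exact Ha. }
    assert (Hkt : k <= t).
    { destruct (path_exists c0) as [p Hp]. specialize (Hc c0 p (or_introl eq_refl) Hp). lia. }
    assert (Hk1 : 1 <= k) by (unfold k, ts; cbn; lia).
    rewrite leaves_list by discriminate.
    eapply Nat.le_trans.
    + apply (sum_bound leaves (lval (t - k))).
      intros c Hin. apply IH; auto. intros p Hp. specialize (Hc c p Hin Hp). lia.
    + fold k. pose proof (lval_ge_n k k ltac:(lia) Hk1).
      pose proof (lval_mul k (t - k)). replace (k + (t - k)) with t in * by lia.
      eapply Nat.le_trans; [apply Nat.mul_le_mono_r; eassumption|assumption].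
Qed.

Lemma rep_adm k t U : 1 <= k -> admissible t U -> admissible (k + t) (Node (repeat U k)).
Proof.
  intros Hk Ha p Hp. inversion Hp; subst.
  - destruct k; cbn in *; [lia|discriminate].
  - match goal with Hi : In _ (repeat _ _) |- _ => apply repeat_spec in Hi; subst end.
    match goal with Hr : rtl_path U _ |- _ => specialize (Ha _ Hr) end.
    cbn. rewrite repeat_length. unfold list_sum in Ha. lia.
Qed.

Lemma rep_leaves k U : 1 <= k -> leaves (Node (repeat U k)) = k * leaves U.
Proof.
  intro Hk. rewrite leaves_list by (destruct k; [lia|discriminate]).
  clear Hk. induction k. reflexivity. simpl repeat. simpl map. change (list_sum (leaves U :: map leaves (repeat U k))) with (leaves U + list_sum (map leaves (repeat U k))). rewrite IHk. lia.
Qed.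

Lemma adm_mono t t' T : t <= t' -> admissible t T -> admissible t' T.
Proof. intros H Ha p Hp. specialize (Ha p Hp). lia. Qed.

Lemma leaf_adm t : admissible t (Node nil).
Proof. intros p Hp. inversion Hp; subst. cbn. lia. match goal with Hi : In _ nil |- _ => inversion Hi end. Qed.

Lemma lower_n n : forall t, t <= n -> exists T, admissible t T /\ leaves T = lval t.
Proof.
  induction n as [|n IH]; intros t Ht.
  - exists (Node nil). split. apply leaf_adm. assert (t = 0) by lia; subst; reflexivity.
  - destruct (le_lt_dec 5 t).
    + destruct (IH (t - 3) ltac:(lia)) as [U [HS HL]].
      exists (Node (repeat U 3)). split.
      * replace t with (3 + (t - 3)) by lia. apply rep_adm; auto.
      * rewrite rep_leaves by lia. replace (lval t) with (lval ((t-3)+3)) by (f_equal; lia).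
        rewrite lval_step by lia. lia.
    + destruct t as [|[|[|[|[|t]]]]]; try lia.
      * exists (Node nil). split. apply leaf_adm. reflexivity.
      * exists (Node nil). split. apply leaf_adm. reflexivity.
      * exists (Node (repeat (Node nil) 2)). split.
        apply (rep_adm 2 0); [lia|apply leaf_adm]. reflexivity.
      * exists (Node (repeat (Node nil) 3)). split.
        apply (rep_adm 3 0); [lia|apply leaf_adm]. reflexivity.
      * exists (Node (repeat (Node (repeat (Node nil) 2)) 2)). split.
        apply (rep_adm 2 2); [lia|]. apply (rep_adm 2 0); [lia|apply leaf_adm]. reflexivity.
Qed.

Theorem lemma1 (t : nat) :
  (exists T : tree, admissible t T /\ leaves T = lval t) /\
  (forall T : tree, admissible t T -> leaves T <= lval t).
Proof.
  split.
  - apply (lower_n t); lia.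
  - intros T H. apply (upper T t H).
Qed.
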